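(* In the setting below, for each $1\le t\le mn$, $$\left|\mathbb{E}\left(w_t\left(z_t-\frac1n\right)\right)\right|\le \frac{4}{mn}\sqrt{6\sum_{i=1}^{mn}\mathbb{E}(z_i)+8m}.$$
   Context: Setting: $m,n$ are positive integers with $n\ge 1200\sqrt m$. A deck of $mn$ cards with $m$ copies of each label $1,\dots,n$ is shuffled uniformly at random. A fixed guessing strategy is used: in round $t=1,\dots,mn$ the Guesser guesses $g_t\in\{1,\dots,n\}$, a function (possibly randomized independently of the deck) of $y_1,\dots,y_{t-1}$, where $y_t\in\{0,1\}$ is the indicator that the $t$-th card has label $g_t$. For a vector $v$, $v_{\le t}:=(v_1,\dots,v_t)$. For $1\le k\le n$, $1\le t\le mn+1$: $a(k,t):=|\{1\le i<t: g_i=k\}|$. Let $Y:=\lfloor \tfrac16\sqrt m\, n\rfloor$. Let $(z_1,\dots,z_{mn})\in\{0,1\}^{mn}$ be a random vector (on an extension of the probability space), with $c(k,t):=|\{1\le i<t: g_i=k,\ z_i=1\}|$, satisfying almost surely: (a) for all $k,t$: $m-\max\{mn-a(k,t)-Y,0\}\le c(k,t)\le m$; (b) for each $t$, conditioned on $g_{\le t},y_{\le t}$, the coordinates of $z_{\le t}$ are mutually independent and independent from $g_{\le mn},y_{\le mn}$; (c) for each $t$, if $a(g_t,t)<mn-Y$ then $\mathbb{E}(z_t\mid g_{\le t},z_{\le t-1})=\frac{m-c(g_t,t)}{mn-a(g_t,t)-Y}$; (d) for each $t$, if $\mathbb{E}(y_t\mid g_{\le t},y_{\le t-1})\le\mathbb{E}(z_t\mid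 g_{\le t},z_{\le t-1})$ then $y_t\le z_t$. (Such a vector exists.) For $1\le t\le mn$, $w_t\in\{0,1\}$ is the indicator of the event $a(g_t,t)\le \frac12 mn$. *)

(* Defs.v *)
From HB Require Import structures.
From mathcomp Require Import all_boot all_order all_algebra.
From mathcomp Require Import reals.
Set Implicit Arguments. Unset Strict Implicit. Unset Printing Implicit Defensive.
Import Order.TTheory GRing.Theory Num.Theory.
Local Open Scope ring_scope.

Section FinProb.
Context {R : realType} {Omega : finType} (P : Omega -> R).

Definition is_fprob : Prop := (forall w, 0 <= P w) /\ \sum_w P w = 1.

Definition Pr (A : pred Omega) : R := \sum_(w | A w) P w.

Definition Ex (X : Omega -> R) : R := \sum_w P w * X w.

Definition condEx {T : eqType} (V : Omega -> T) (X : Omega -> R) (w0 : Omega) : R :=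
  (\sum_(w | V w == V w0) P w * X w) / Pr (fun w => V w == V w0).

Definition condPr {T : eqType} (V : Omega -> T) (A : pred Omega) (w0 : Omega) : R :=
  condEx V (fun w => (A w)%:R) w0.
End FinProb.

(* Rounds are indexed 0-based by 'I_(m*n): round t here is round t+1 of the paper.
   Labels are 'I_n (label k here is label k+1 of the paper). *)

Definition valid_deck (m n : nat) (s : {ffun 'I_(m * n) -> 'I_n}) : bool :=
  [forall k : 'I_n, #|[set i : 'I_(m * n) | s i == k]| == m].

Definition rounds_before (N : nat) (t : nat) : seq 'I_N :=
  [seq j <- enum 'I_N | (nat_of_ord j < t)%N].
Definition rounds_upto (N : nat) (t : nat) : seq 'I_N :=
  [seq j <- enum 'I_N | (nat_of_ord j <= t)%N].

Definition acount {Omega : finType} {N n : nat} (g : 'I_N -> Omega -> 'I_n)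
  (k : 'I_n) (t : nat) (w : Omega) : nat :=
  #|[set i : 'I_N | (i < t)%N && (g i w == k)]|.

Definition ccount {Omega : finType} {N n : nat} (g : 'I_N -> Omega -> 'I_n)
  (z : 'I_N -> Omega -> bool) (k : 'I_n) (t : nat) (w : Omega) : nat :=
  #|[set i : 'I_N | [&& (i < t)%N, g i w == k & z i w]]|.

Definition Yval {R : realType} (m n : nat) : R :=
  (Num.floor (Num.sqrt (m%:R : R) * n%:R / 6))%:~R.
Arguments valid_deck : clear implicits.

(* Main.v *)
Require Import Defs.
From HB Require Import structures.
From mathcomp Require Import all_boot all_order all_algebra.
From mathcomp Require Import reals.
From mathcomp Require Import ring lra zify.
Set Implicit Arguments. Unset Strict Implicit. Unset Printing Implicit Defensive.
Import Order.TTheory GRing.Theory Num.Theory.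
Local Open Scope ring_scope.

Section ExL.
Context {R : realType} {Omega : finType} (P : Omega -> R).
Hypothesis P0 : forall w, 0 <= P w.

Lemma Ex_le (f h : Omega -> R) : (forall w, 0 < P w -> f w <= h w) -> Ex P f <= Ex P h.
Proof.
move=> H; rewrite /Ex; apply: ler_sum => w _.
have := P0 w; rewrite le_eqVlt => /orP[/eqP <-|Pw]; first by rewrite !mul0r.
by rewrite ler_pM2l // H.
Qed.

Lemma Ex_eq (f h : Omega -> R) : (forall w, 0 < P w -> f w = h w) -> Ex P f = Ex P h.
Proof.
move=> H; apply/eqP; rewrite eq_le; apply/andP; split; apply: Ex_le => w /H ->//.
Qed.

Lemma ExD (f h : Omega -> R) : Ex P (fun w => f w + h w) = Ex P f + Ex P h.
Proof. by rewrite /Ex -big_split; apply: eq_bigr => w _; rewrite mulrDr. Qed.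

Lemma ExZ c (f : Omega -> R) : Ex P (fun w => c * f w) = c * Ex P f.
Proof. by rewrite /Ex mulr_sumr; apply: eq_bigr => w _; rewrite mulrCA. Qed.

Lemma ExN (f : Omega -> R) : Ex P (fun w => - f w) = - Ex P f.
Proof. by rewrite /Ex -sumrN; apply: eq_bigr => w _; rewrite mulrN. Qed.

Lemma ExB (f h : Omega -> R) : Ex P (fun w => f w - h w) = Ex P f - Ex P h.
Proof. by rewrite ExD ExN. Qed.

Lemma Ex_abs (f : Omega -> R) : `|Ex P f| <= Ex P (fun w => `|f w|).
Proof.
rewrite /Ex; apply: le_trans (ler_norm_sum _ _ _) _; apply: ler_sum => w _.
by rewrite normrM ger0_norm.
Qed.

Lemma Ex_ge0 (f : Omega -> R) : (forall w, 0 <= f w) -> 0 <= Ex P f.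
Proof. by move=> H; apply: sumr_ge0 => w _; rewrite mulr_ge0. Qed.

Lemma Ex_cst c : \sum_w P w = 1 -> Ex P (fun _ => c) = c.
Proof. by move=> H; rewrite /Ex -mulr_suml H mul1r. Qed.

Lemma tower {T : eqType} (V : Omega -> T) (h X Yv : Omega -> R) :
  (forall w w', V w = V w' -> h w = h w') ->
  (forall w, 0 < P w -> h w != 0 -> condEx P V X w = Yv w) ->
  Ex P (fun w => h w * X w) = Ex P (fun w => h w * Yv w).
Proof.
move=> hV hY.
have -> : Ex P (fun w => h w * Yv w) = Ex P (fun w => h w * condEx P V X w).
  apply: Ex_eq => w Pw; have [->|hw] := eqVneq (h w) 0; first by rewrite !mul0r.
  by rewrite hY.
rewrite /Ex /condEx /Pr.
set Q := fun w => \sum_(u | V u == V w) P u.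
have QE : forall w w', V w = V w' -> Q w = Q w'.
  by move=> w w' e; rewrite /Q e.
transitivity (\sum_w \sum_w' (if V w == V w' then P w * h w * X w * (P w' / Q w) else 0)).
  apply: eq_bigr => w _; rewrite -big_mkcond /= -mulr_sumr.
  have [Pz|Pnz] := eqVneq (Q w) 0.
    have : P w = 0.
      apply/eqP; rewrite eq_le P0 andbT -Pz /Q.
      rewrite (bigD1 w) //= lerDl; apply: sumr_ge0 => u _; exact: P0.
    by move=> ->; rewrite !mul0r.
  rewrite -mulr_suml (eq_bigl (fun i => V i == V w)); last by move=> i; rewrite eq_sym.
  by rewrite -/(Q w) mulfV // mulr1 mulrA.
rewrite exchange_big /=; apply: eq_bigr => w _.
rewrite -big_mkcond /= -/(Q w).
rewrite [RHS](_ : _ = (\sum_(w0 | V w0 == V w) P w0 * X w0) * (h w * P w / Q w)); last by ring.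
rewrite mulr_suml; apply: eq_bigr => w' /eqP e.
rewrite (hV _ _ e) (QE _ _ e).
by rewrite mulrA mulrA; ring.
Qed.
End ExL.
Section Fdefs.
Context {R : realType} (Yr : R).
Hypothesis Y0 : 0 <= Yr.
Definition pos (x : R) := if 0 <= x then x else 0.
Definition negp (x : R) := if x < 0 then x else 0.
Definition ff (x : R) := pos (x - Yr) ^+ 2 + negp x ^+ 2.
Definition ff' (x : R) := 2 * pos (x - Yr) + 2 * negp x.

Lemma ff_step x d : ff (x + d) <= ff x + ff' x * d + d ^+ 2.
Proof.
have y0 : 0 <= Yr - 0 by rewrite subr0.
rewrite /ff /ff' /pos /negp.
case: (lerP 0 (x + d - Yr)) => h1; case: (ltrP (x + d) 0) => h2;
case: (lerP 0 (x - Yr)) => h3; case: (ltrP x 0) => h4; first [by exfalso; lra | nra].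
Qed.

Lemma ff_sign x : 0 <= ff' x * x.
Proof. have y0 : 0 <= Yr - 0 by rewrite subr0. rewrite /ff' /pos /negp; case: (lerP 0 (x - Yr)) => h1; case: (ltrP x 0) => h2; first [by exfalso; lra | nra]. Qed.

Lemma ff_ge0 x : 0 <= ff x.
Proof. by rewrite /ff addr_ge0 // sqr_ge0. Qed.

Lemma ff_abs x : `|x| <= Yr + Num.sqrt (ff x).
Proof.
have y0 : 0 <= Yr - 0 by rewrite subr0.
rewrite /ff /pos /negp.
case: (lerP 0 (x - Yr)) => h1; case: (ltrP x 0) => h2;
  rewrite ?expr0n /= ?addr0 ?add0r ?(@sqrtr_sqr R).
- exfalso; lra.
- rewrite !ger0_norm; lra.
- rewrite !ltr0_norm; lra.
- rewrite (@sqrtr0 R) ger0_norm; lra.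
Qed.

Lemma sqrt_amgm (x c : R) : 0 <= x -> 0 < c -> Num.sqrt x <= (x / c + c) / 2.
Proof.
move=> x0 c0; have s0 := @sqrtr_ge0 R x; have s2 := @sqr_sqrtr R x x0.
have -> : (x / c + c) / 2 = (x + c ^+ 2) / (2 * c) by field; lra.
rewrite ler_pdivlMr; last lra. have := sqr_ge0 (Num.sqrt x - c). nra.
Qed.
End Fdefs.

Lemma sum_ind (R : realType) (T : finType) (C b : pred T) :
  \sum_(i | C i) ((b i)%:R : R) = #|[set i | C i && b i]|%:R.
Proof.
rewrite -cardsE -sumr_const.
rewrite big_mkcond /= [RHS]big_mkcond /=; apply: eq_bigr => i _; rewrite !inE.
by case: (C i); case: (b i).
Qed.

Lemma sum_one (R : realType) (T : finType) (C : pred T) :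
  \sum_(i | C i) (1 : R) = #|[set i | C i]|%:R.
Proof. by rewrite sumr_const cardsE. Qed.

Section Main.
Context {R : realType} (m n : nat) {Omega : finType}
  (g : 'I_(m * n) -> Omega -> 'I_n) (z : 'I_(m * n) -> Omega -> bool) (Yr : R).

Definition wb (s : 'I_(m * n)) w : bool :=
  (acount g (g s w) s w)%:R <= (m * n)%:R / 2 :> R.

Definition Xt (k : 'I_n) (s : nat) w : R :=
  Yr + \sum_(i : 'I_(m * n) | (i < s)%N && (g i w == k) && wb i w)
         (1 - n%:R * (z i w)%:R).

Definition Phi (s : nat) w : R := \sum_(k : 'I_n) ff Yr (Xt k s w).

Lemma acount_mono k i s w : (i <= s)%N -> (acount g k i w <= acount g k s w)%N.
Proof.
move=> le; apply: subset_leq_card; apply/subsetP => j; rewrite !inE.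
by case/andP => a b; rewrite b andbT; apply: leq_trans a le.
Qed.

Lemma Xt_eq (s : 'I_(m * n)) w : wb s w ->
  Xt (g s w) s w = (acount g (g s w) s w)%:R + Yr - n%:R * (ccount g z (g s w) s w)%:R.
Proof.
move=> ws; rewrite /Xt.
rewrite (eq_bigl (fun i : 'I_(m * n) => (i < s)%N && (g i w == g s w))); last first.
  move=> i; case: (boolP ((i < s)%N && (g i w == g s w))) => //= /andP[lt /eqP e].
  rewrite /wb e; apply: le_trans ws; rewrite ler_nat; apply: acount_mono; exact: ltnW.
rewrite sumrB sum_one -mulr_sumr sum_ind /acount /ccount.
have -> : [set i : 'I_(m * n) | ((i < s)%N && (g i w == g s w)) && z i w] =
   [set i : 'I_(m * n) | [&& (i < s)%N, g i w == g s w & z i w]].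
  by apply/setP => i; rewrite !inE andbA.
by ring.
Qed.

Lemma Xt_succ (s : 'I_(m * n)) k w :
  Xt k s.+1 w = Xt k s w + (if (g s w == k) && wb s w then 1 - n%:R * (z s w)%:R else 0).
Proof.
rewrite /Xt -addrA; congr (_ + _).
rewrite big_mkcond [X in _ = X + _]big_mkcond /=.
rewrite [X in _ = _ + X](_ : _ = \sum_(i : 'I_(m * n) | i == s)
   (if (g s w == k) && wb s w then 1 - n%:R * (z s w)%:R else 0)); last by rewrite big_pred1_eq.
rewrite [X in _ = _ + X]big_mkcond -big_split /=; apply: eq_bigr => i _.
have [->|ne] := eqVneq i s.
  rewrite ltnSn ltnn /= add0r. by [].
have -> : (i < s.+1)%N = (i < s)%N.
  by rewrite ltnS leq_eqVlt -[nat_of_ord i == _]/(i == s) (negbTE ne).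
by rewrite addr0.
Qed.

Definition Dl (s : 'I_(m * n)) w : R := if wb s w then 1 - n%:R * (z s w)%:R else 0.

Hypothesis Y0 : 0 <= Yr.

Lemma Phi_step (s : 'I_(m * n)) w :
  Phi s.+1 w <= Phi s w + ff' Yr (Xt (g s w) s w) * Dl s w + Dl s w ^+ 2.
Proof.
rewrite /Phi.
have E : forall k, Xt k s.+1 w = Xt k s w + (g s w == k)%:R * Dl s w.
  move=> k; rewrite Xt_succ /Dl; case: eqP => _ /=; last by rewrite mul0r.
  by rewrite mul1r.
apply: (@le_trans _ _ (\sum_k (ff Yr (Xt k s w) + (ff' Yr (Xt k s w) * ((g s w == k)%:R * Dl s w)
    + ((g s w == k)%:R * Dl s w) ^+ 2)))) _.
  apply: ler_sum => k _; rewrite E addrA; exact: ff_step.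
rewrite big_split /= -addrA lerD2l.
rewrite (bigD1 (g s w)) //= eqxx mul1r big1 ?addr0 //.
by move=> k /negbTE; rewrite eq_sym => ->; rewrite mul0r mulr0 expr0n /= addr0.
Qed.

Lemma Phi0 w : Phi 0 w = 0.
Proof.
rewrite /Phi big1 // => k _; rewrite /Xt big_pred0 ?addr0; last by move=> i.
have y0 : 0 <= Yr - 0 by rewrite subr0.
rewrite /ff /pos /negp subrr lexx; case: (ltrP Yr 0) => h; first by exfalso; lra.
by rewrite expr0n /= addr0.
Qed.

Lemma acount_ext k s w w' : (forall i : 'I_(m * n), (i < s)%N -> g i w = g i w') ->
  acount g k s w = acount g k s w'.
Proof.
move=> H; rewrite /acount; apply: eq_card => i; rewrite !inE.
by case: (boolP (i < s)%N) => //= /H ->.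
Qed.

Lemma ccount_ext k s w w' : (forall i : 'I_(m * n), (i < s)%N -> g i w = g i w' /\ z i w = z i w') ->
  ccount g z k s w = ccount g z k s w'.
Proof.
move=> H; rewrite /ccount; apply: eq_card => i; rewrite !inE.
by case: (boolP (i < s)%N) => //= /H [-> ->].
Qed.

Lemma wb_ext (i : 'I_(m * n)) w w' : (forall j : 'I_(m * n), (j <= i)%N -> g j w = g j w') ->
  wb i w = wb i w'.
Proof.
move=> H; rewrite /wb H // (acount_ext _ (w' := w')) // => j lt; apply: H; exact: ltnW.
Qed.

Lemma Xt_ext k (s : nat) w w' :
  (forall i : 'I_(m * n), (i < s)%N -> g i w = g i w' /\ z i w = z i w') ->
  Xt k s w = Xt k s w'.
Proof.
move=> H; rewrite /Xt; congr (_ + _); rewrite big_mkcond [RHS]big_mkcond; apply: eq_bigr => i _.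
case: (boolP (i < s)%N) => //= lt.
have [e1 e2] := H i lt; rewrite e1 e2 (wb_ext (w' := w')) // => j le.
by case: (H j (leq_ltn_trans le lt)).
Qed.

End Main.

Lemma sum_succ (R : realType) N (F : 'I_N -> R) (s : 'I_N) :
  \sum_(i : 'I_N | (i < s.+1)%N) F i = \sum_(i : 'I_N | (i < s)%N) F i + F s.
Proof.
rewrite (bigD1 s) //= addrC; congr (_ + _); apply: eq_bigl => i.
rewrite ltnS leq_eqVlt -[nat_of_ord i == _]/(i == s).
case: (eqVneq i s) => [->|_]; by rewrite ?ltnn ?andbT ?andbF.
Qed.

Section Main2.
Context {R : realType} (m n : nat) {Omega : finType} (P : Omega -> R)
  (g : 'I_(m * n) -> Omega -> 'I_n) (z : 'I_(m * n) -> Omega -> bool) (Yr : R).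
Hypothesis P0 : forall w, 0 <= P w.
Hypothesis Y0 : 0 <= Yr.
Hypothesis Ymn : Yr <= (m * n)%:R / 6.
Hypothesis mn_pos : (0 < m * n)%N.
Hypothesis hsum : \sum_w P w = 1.
Hypothesis hc : forall (t : 'I_(m * n)) (w : Omega), 0 < P w ->
      (acount g (g t w) t w)%:R < (m * n)%:R - Yr :> R ->
      condEx P (fun w' => ([seq g i w' | i <- rounds_upto (m * n) t],
                           [seq z i w' | i <- rounds_before (m * n) t]))
             (fun w' => (z t w')%:R) w
      = (m%:R - (ccount g z (g t w) t w)%:R)
        / ((m * n)%:R - (acount g (g t w) t w)%:R - Yr).

Definition Vs (s : 'I_(m * n)) w :=
  ([seq g i w | i <- rounds_upto (m * n) s], [seq z i w | i <- rounds_before (m * n) s]).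

Lemma V_ext (s : 'I_(m * n)) w w' : Vs s w = Vs s w' ->
  (forall i : 'I_(m * n), (i <= s)%N -> g i w = g i w') /\
  (forall i : 'I_(m * n), (i < s)%N -> z i w = z i w').
Proof.
case=> /eq_in_map h1 /eq_in_map h2; split => i hi; [apply: h1 | apply: h2];
  by rewrite mem_filter hi mem_enum.
Qed.

Definition pp (s : 'I_(m * n)) w : R :=
  (m%:R - (ccount g z (g s w) s w)%:R) / ((m * n)%:R - (acount g (g s w) s w)%:R - Yr).

Lemma den_pos (s : 'I_(m * n)) w : @wb R _ _ _ g s w ->
  (m * n)%:R / 3 <= (m * n)%:R - (acount g (g s w) s w)%:R - Yr.
Proof.
rewrite /wb => h.
have : (0 : R) < (m * n)%:R by rewrite ltr0n.
have : Yr <= (m * n)%:R / 6 + 0 by rewrite addr0.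
lra.
Qed.

Lemma tower_z (s : 'I_(m * n)) (h : Omega -> R) :
  (forall w w', Vs s w = Vs s w' -> h w = h w') -> (forall w, h w != 0 -> @wb R _ _ _ g s w) ->
  Ex P (fun w => h w * (z s w)%:R) = Ex P (fun w => h w * pp s w).
Proof.
move=> hV hw; apply: (tower P0 (V := Vs s)) => // w Pw /hw ws.
rewrite /pp -hc //.
have := den_pos ws; have : (0 : R) < (m * n)%:R by rewrite ltr0n.
lra.
Qed.
Lemma h_ext (s : 'I_(m * n)) w w' : Vs s w = Vs s w' ->
  @wb R _ _ _ g s w = @wb R _ _ _ g s w' /\ Xt g z Yr (g s w) s w = Xt g z Yr (g s w') s w'.
Proof.
move=> /V_ext [Hg Hz]; split; first by apply: wb_ext.
rewrite (Hg s) //; apply: Xt_ext => i lt; split; [apply: Hg; exact: ltnW | exact: Hz].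
Qed.

Lemma Ex0 : Ex P (fun _ => 0) = 0.
Proof. by rewrite /Ex big1 // => w _; rewrite mulr0. Qed.

Lemma key_neg (s : 'I_(m * n)) :
  Ex P (fun w => ff' Yr (Xt g z Yr (g s w) s w) * Dl g z s w) <= 0.
Proof.
set h := fun w => ((@wb R _ _ _ g s w)%:R : R) * ff' Yr (Xt g z Yr (g s w) s w).
have -> : Ex P (fun w => ff' Yr (Xt g z Yr (g s w) s w) * Dl g z s w) =
    Ex P (fun w => h w - n%:R * (h w * (z s w)%:R)).
  apply: Ex_eq => // w _; rewrite /h /Dl; case: (@wb R _ _ _ g s w) => /=; ring.
rewrite ExB // ExZ (tower_z (h := h)); first last.
- by move=> w; rewrite /h; case: (@wb R _ _ _ g s w) => //=; rewrite mul0r eqxx.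
- by move=> w w' /h_ext [e1 e2]; rewrite /h e1 e2.
rewrite -ExZ -ExB -Ex0; apply: Ex_le => // w _.
rewrite /h; case: (boolP (@wb R _ _ _ g s w)) => ws /=; last by rewrite !mul0r mulr0 subrr.
have dp := den_pos ws.
have mn0 : (0 : R) < (m * n)%:R by rewrite ltr0n.
rewrite mul1r (@Xt_eq R m n Omega g z Yr s w ws) /pp.
set a := ((acount g (g s w) s w)%:R : R).
set c := ((ccount g z (g s w) s w)%:R : R).
set X := a + Yr - n%:R * c.
set den := (m * n)%:R - a - Yr.
have dn : den != 0 by rewrite /den; apply/eqP; lra.
have -> : ff' Yr X - n%:R * (ff' Yr X * ((m%:R - c) / den)) = - (ff' Yr X * X) / den.
  rewrite /X /den natrM; field; rewrite -natrM //.
rewrite mulNr oppr_le0 divr_ge0 //; first exact: ff_sign.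
rewrite /den; lra.
Qed.
Lemma Dl_sq (s : 'I_(m * n)) w : (Dl g z s w : R) ^+ 2 <= 1 + n%:R ^+ 2 * (z s w)%:R.
Proof.
have n0 : (0 : R) <= n%:R by rewrite ler0n.
rewrite /Dl; case: (@wb R _ _ _ g s w); case: (z s w) => /=; nra.
Qed.

Lemma Phi_bound (s : nat) : (s <= m * n)%N ->
  Ex P (Phi g z Yr s) <= s%:R + n%:R ^+ 2 * \sum_(i : 'I_(m * n) | (i < s)%N) Ex P (fun w => (z i w)%:R).
Proof.
elim: s => [_|s IH lt].
  have -> : Ex P (Phi g z Yr 0) = 0.
    by rewrite -Ex0; apply: Ex_eq => // w _; rewrite (Phi0 g z Y0).
  by rewrite big_pred0 // mulr0 addr0.
have lt' : (s < m * n)%N by [].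
pose s' := Ordinal lt'.
apply: (@le_trans _ _ (Ex P (fun w => Phi g z Yr s w + ff' Yr (Xt g z Yr (g s' w) s' w) * Dl g z s' w
   + Dl g z s' w ^+ 2))).
  by apply: Ex_le => // w _; apply: (Phi_step g z Y0 s' w).
rewrite !ExD.
have IH' := IH (ltnW lt).
have K := key_neg s'.
have D2 : Ex P (fun w => Dl g z s' w ^+ 2) <= 1 + n%:R ^+ 2 * Ex P (fun w => (z s' w)%:R).
  apply: (@le_trans _ _ (Ex P (fun w => 1 + n%:R ^+ 2 * (z s' w)%:R))).
    apply: Ex_le => // w _; exact: Dl_sq.
  by rewrite ExD ExZ Ex_cst.
rewrite (sum_succ (fun i => Ex P (fun w => (z i w)%:R)) s') /=.
rewrite -[s.+1]addn1 natrD.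
lra.
Qed.
End Main2.

Theorem lemma2p4 (R : realType) (m n : nat)
  (m_pos : (0 < m)%N) (n_pos : (0 < n)%N)
  (hmn : 1200 * Num.sqrt (m%:R : R) <= n%:R)
  (Omega : finType) (P : Omega -> R) (hP : is_fprob P)
  (* the shuffled deck *)
  (deck : Omega -> {ffun 'I_(m * n) -> 'I_n})
  (* the Guesser's private randomness and strategy *)
  (U : finType) (rho : Omega -> U)
  (G : 'I_(m * n) -> U -> seq bool -> 'I_n)
  (g : 'I_(m * n) -> Omega -> 'I_n) (y : 'I_(m * n) -> Omega -> bool)
  (z : 'I_(m * n) -> Omega -> bool)
  (* the deck is uniformly distributed over valid decks *)
  (h_unif : forall s, Pr P (fun w => deck w == s) =
      (valid_deck m n s)%:R / #|[set s' | valid_deck m n s']|%:R)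
  (* the randomness is independent of the deck *)
  (h_indep : forall s u, Pr P (fun w => (deck w == s) && (rho w == u)) =
      Pr P (fun w => deck w == s) * Pr P (fun w => rho w == u))
  (* the guesses: g_t is a function of the randomness and y_1..y_{t-1} *)
  (h_g : forall t w, g t w = G t (rho w) [seq y i w | i <- rounds_before (m * n) t])
  (* the feedback: y_t = 1 iff the t-th card has label g_t *)
  (h_y : forall t w, y t w = (deck w t == g t w))
  (* (a) *)
  (h_a : forall (k : 'I_n) (t : nat), (t <= m * n)%N -> forall w, 0 < P w ->
      m%:R - Num.max ((m * n)%:R - (acount g k t w)%:R - Yval m n) 0
        <= (ccount g z k t w)%:R :> R
      /\ (ccount g z k t w <= m)%N)
  (* (b) *)
  (h_b : forall (t : 'I_(m * n)) (w0 : Omega), 0 < P w0 ->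
      forall (bz : 'I_(m * n) -> bool)
             (h : {ffun 'I_(m * n) -> 'I_n} * {ffun 'I_(m * n) -> bool}),
      let V := fun w => ([seq g i w | i <- rounds_upto (m * n) t],
                         [seq y i w | i <- rounds_upto (m * n) t]) in
      condPr P V (fun w => [forall i : 'I_(m * n), (i <= t)%N ==> (z i w == bz i)]
                           && (([ffun i => g i w], [ffun i => y i w]) == h)) w0
      = (\prod_(i : 'I_(m * n) | (i <= t)%N) condPr P V (fun w => z i w == bz i) w0)
        * condPr P V (fun w => ([ffun i => g i w], [ffun i => y i w]) == h) w0)
  (* (c) *)
  (h_c : forall (t : 'I_(m * n)) (w : Omega), 0 < P w ->
      (acount g (g t w) t w)%:R < (m * n)%:R - Yval m n :> R ->
      condEx P (fun w' => ([seq g i w' | i <- rounds_upto (m * n) t],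
                           [seq z i w' | i <- rounds_before (m * n) t]))
             (fun w' => (z t w')%:R) w
      = (m%:R - (ccount g z (g t w) t w)%:R)
        / ((m * n)%:R - (acount g (g t w) t w)%:R - Yval m n))
  (* (d) *)
  (h_d : forall (t : 'I_(m * n)) (w : Omega), 0 < P w ->
      condEx P (fun w' => ([seq g i w' | i <- rounds_upto (m * n) t],
                           [seq y i w' | i <- rounds_before (m * n) t]))
             (fun w' => (y t w')%:R) w
      <= condEx P (fun w' => ([seq g i w' | i <- rounds_upto (m * n) t],
                              [seq z i w' | i <- rounds_before (m * n) t]))
             (fun w' => (z t w')%:R) w ->
      (y t w <= z t w)%N)
  (t : 'I_(m * n)) :
  let wt := fun w => ((acount g (g t w) t w)%:R <= (m * n)%:R / 2 :> R)%:R in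
  `| Ex P (fun w => wt w * ((z t w)%:R - n%:R^-1)) |
    <= 4 / (m * n)%:R
       * Num.sqrt (6 * (\sum_(i : 'I_(m * n)) Ex P (fun w => (z i w)%:R)) + 8 * m%:R).
Proof.
pose wt := fun w : Omega => (((acount g (g t w) t w)%:R <= (m * n)%:R / 2 :> R)%:R : R).
suff H : `| Ex P (fun w => wt w * ((z t w)%:R - n%:R^-1)) |
    <= 4 / (m * n)%:R
       * Num.sqrt (6 * (\sum_(i : 'I_(m * n)) Ex P (fun w => (z i w)%:R)) + 8 * m%:R).
  exact: H.
case: hP => P0 hsum.
set Yr := Yval m n : R.
have m1 : (1 : R) <= m%:R by rewrite ler1n.
have n1 : (1 : R) <= n%:R by rewrite ler1n.
have sm0 := @sqrtr_ge0 R m%:R.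
have sm2 : Num.sqrt (m%:R : R) ^+ 2 = m%:R by rewrite sqr_sqrtr // ler0n.
have smm : Num.sqrt (m%:R : R) <= m%:R by nra.
have Y0 : 0 <= Yr.
  rewrite /Yr /Yval ler0z floor_ge0; apply: divr_ge0 => //; apply: mulr_ge0 => //.
have Ysq : Yr <= Num.sqrt (m%:R : R) * n%:R / 6 by rewrite /Yr /Yval floor_le.
have Ymn : Yr <= (m * n)%:R / 6.
  apply: (le_trans Ysq); rewrite natrM; nra.
have mn_pos : (0 < m * n)%N by rewrite muln_gt0 m_pos.
have mn0 : (0 : R) < (m * n)%:R by rewrite ltr0n.
have L1 : Ex P (fun w => wt w * ((z t w)%:R - n%:R^-1)) =
          Ex P (fun w => wt w * (pp g z Yr t w - n%:R^-1)).
  have E1 : forall f : Omega -> R, Ex P (fun w => wt w * (f w - n%:R^-1)) =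
       Ex P (fun w => wt w * f w) - n%:R^-1 * Ex P wt.
    move=> f; rewrite -ExZ -ExB; apply: Ex_eq => // w _; ring.
  rewrite !E1 (tower_z P0 Ymn mn_pos h_c (h := wt)) //.
  - by move=> w w' /(h_ext Yr) [e _]; rewrite /wt -/(@wb R _ _ _ g t w) -/(@wb R _ _ _ g t w') e.
  - by move=> w; rewrite /wb /wt; case: (_ <= _) => //=; rewrite eqxx.
rewrite L1.
set S := \sum_(i : 'I_(m * n)) Ex P (fun w => (z i w)%:R).
have S0 : 0 <= S by apply: sumr_ge0 => i _; apply: Ex_ge0 => // w; rewrite ler0n.
set q := Num.sqrt (m%:R + S).
have q0 : 0 <= q by apply: sqrtr_ge0.
have q2 : q ^+ 2 = m%:R + S by rewrite sqr_sqrtr //; lra.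
have qm : Num.sqrt (m%:R : R) <= q by rewrite ler_wsqrtr //; lra.
have qpos : 0 < q by nra.
have Phi0' : forall w, 0 <= Phi g z Yr t w by move=> w; apply: sumr_ge0 => k _; exact: ff_ge0.
have PW : forall w, 0 < P w -> `|wt w * (pp g z Yr t w - n%:R^-1)| <=
    3 / (n%:R * (m * n)%:R) * (Yr + Num.sqrt (Phi g z Yr t w)).
  move=> w _.
  have rhs0 : 0 <= 3 / (n%:R * (m * n)%:R) * (Yr + Num.sqrt (Phi g z Yr t w)).
    apply: mulr_ge0; last by apply: addr_ge0 => //; apply: sqrtr_ge0.
    apply: divr_ge0 => //; apply: mulr_ge0; lra.
  have -> : wt w = (@wb R _ _ _ g t w)%:R by [].
  case: (boolP (@wb R _ _ _ g t w)) => ws /=; last by rewrite mul0r normr0.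
  rewrite mul1r.
  have dp := den_pos Ymn mn_pos ws.
  have XE := Xt_eq z Yr ws.
  set a := ((acount g (g t w) t w)%:R : R) in dp XE.
  set c := ((ccount g z (g t w) t w)%:R : R) in XE.
  set X := Xt g z Yr (g t w) t w in XE.
  have hX := ff_abs Y0 X.
  have hF : ff Yr X <= Phi g z Yr t w.
    rewrite /Phi (bigD1 (g t w)) //= lerDl; apply: sumr_ge0 => k _; exact: ff_ge0.
  have hs : Num.sqrt (ff Yr X) <= Num.sqrt (Phi g z Yr t w) by apply: ler_wsqrtr.
  set K := Yr + Num.sqrt (Phi g z Yr t w) in rhs0 *.
  have hXK : `|X| <= K by rewrite /K; lra.
  set den := (m * n)%:R - a - Yr in dp.
  have dpos : 0 < den by lra.
  have -> : pp g z Yr t w - n%:R^-1 = X / (n%:R * den).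
    rewrite /pp -/a -/c -/den XE.
    have nz : n%:R != 0 :> R by rewrite pnatr_eq0 -lt0n.
    have key : forall (M NN A C Yv : R), NN != 0 -> M * NN - A - Yv != 0 ->
      (M - C) / (M * NN - A - Yv) - NN^-1 = (A + Yv - NN * C) / (NN * (M * NN - A - Yv)).
      by move=> M NN A C Yv h1 h2; field; rewrite h1 h2.
    move: dpos; rewrite /den natrM => dpos; apply: key => //; exact: lt0r_neq0.
  have nd : 0 < n%:R * den by apply: mulr_gt0 => //; lra.
  rewrite normrM normfV (gtr0_norm nd) ler_pdivrMr //.
  have -> : 3 / (n%:R * (m * n)%:R) * K * (n%:R * den) = K * (3 * den / (m * n)%:R).
    field; apply/andP; split; apply/eqP; lra.
  have r1 : 1 <= 3 * den / (m * n)%:R by rewrite ler_pdivlMr //; lra.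
  have K0 : 0 <= K by apply: le_trans hXK; exact: normr_ge0.
  nra.
set nn := (n%:R : R); set N := ((m * n)%:R : R).
have NE : N = m%:R * nn by rewrite /N /nn natrM.
apply: le_trans (Ex_abs P0 _) _.
apply: le_trans (Ex_le P0 PW) _.
rewrite ExZ ExD Ex_cst //.
set ES := Ex P (fun w => Num.sqrt (Phi g z Yr t w)).
have sub : \sum_(i : 'I_(m * n) | (i < t)%N) Ex P (fun w => (z i w)%:R) <= S.
  rewrite /S [X in _ <= X](bigID (fun i : 'I_(m * n) => (i < t)%N)) /= lerDl.
  by apply: sumr_ge0 => i _; apply: Ex_ge0 => // w; rewrite ler0n.
have EB : Ex P (Phi g z Yr t) <= nn ^+ 2 * q ^+ 2.
  have := Phi_bound P0 Y0 Ymn mn_pos hsum h_c (ltnW (ltn_ord t)).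
  have tN : (t%:R : R) <= N by rewrite /N ler_nat ltnW.
  rewrite q2 -/nn => h; apply: le_trans h _.
  have : N <= nn ^+ 2 * m%:R by rewrite NE; nra.
  have : nn ^+ 2 * \sum_(i : 'I_(m * n) | (i < t)%N) Ex P (fun w => (z i w)%:R) <= nn ^+ 2 * S.
    by rewrite ler_wpM2l // sqr_ge0.
  lra.
have cpos : 0 < nn * q by apply: mulr_gt0 => //; rewrite /nn; lra.
have ESb : ES <= nn * q.
  apply: (@le_trans _ _ (Ex P (fun w => (Phi g z Yr t w / (nn * q) + nn * q) / 2))).
    by apply: Ex_le => // w _; apply: sqrt_amgm.
  have -> : Ex P (fun w => (Phi g z Yr t w / (nn * q) + nn * q) / 2) =
      Ex P (fun w => (2 * (nn * q))^-1 * Phi g z Yr t w + (nn * q) / 2).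
    apply: Ex_eq => // w _; field; apply/andP; split; apply/eqP; lra.
  rewrite ExD ExZ Ex_cst //.
  have : Ex P (Phi g z Yr t) / (nn * q) <= nn * q.
    by rewrite ler_pdivrMr //; nra.
  rewrite (ExZ P _ (Phi g z Yr t)).
  have -> : (2 * (nn * q))^-1 * Ex P (Phi g z Yr t) = Ex P (Phi g z Yr t) / (nn * q) / 2.
    by field; apply/andP; split; apply/eqP; lra.
  lra.
have YB : Yr <= nn * q / 6.
  apply: le_trans Ysq _; rewrite -/nn; nra.
have r : q <= Num.sqrt (6 * S + 8 * m%:R) by apply: ler_wsqrtr; lra.
have N0 : 0 < N by [].
have Ni : 0 < N^-1 by rewrite invr_gt0.
have -> : 3 / (nn * N) * (Yr + ES) = 3 / nn * (Yr + ES) * N^-1.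
  by field; apply/andP; split; apply/eqP; lra.
have -> : 4 / N * Num.sqrt (6 * S + 8 * m%:R) = 4 * Num.sqrt (6 * S + 8 * m%:R) * N^-1.
  by ring.
apply: ler_wpM2r; first lra.
have -> : 3 / nn * (Yr + ES) = 3 * (Yr + ES) / nn by field; apply/eqP; lra.
rewrite ler_pdivrMr; last lra.
nra.
Qed.
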